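(* There exist ternary Euclidean LCD codes with parameters $[37,22,8]$ and $[40,29,6]$.
   Context: A ternary $[n,k,d]$ code is a $k$-dimensional subspace $C\subseteq\mathbb{F}_3^n$ with minimum nonzero Hamming weight $d$; it is Euclidean LCD if $C\cap C^{\perp_E}=\{0\}$, where $C^{\perp_E}$ is the dual with respect to $\langle x,y\rangle_E=\sum x_iy_i$. *)

(* Defs.v *)
From HB Require Import structures.
From mathcomp Require Import all_boot all_order all_algebra.
Set Implicit Arguments. Unset Strict Implicit. Unset Printing Implicit Defensive.
Import GRing.Theory.
Local Open Scope ring_scope.

Notation F3 := 'F_3.

Definition hwt (n : nat) (x : 'rV[F3]_n) : nat := #|[set i : 'I_n | x 0 i != 0]|.

Definition eip (n : nat) (x y : 'rV[F3]_n) : F3 := \sum_(i < n) x 0 i * y 0 i.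

(* The code generated by G : 'M_(k,n) is its row space C = {x | (x <= G)%MS}.
   It is a k-dimensional subspace iff G has full row rank (row_free G). *)
Definition in_code (k n : nat) (G : 'M[F3]_(k, n)) (x : 'rV[F3]_n) : bool :=
  (x <= G)%MS.

Definition ternary_code_params (n k d : nat) (G : 'M[F3]_(k, n)) : Prop :=
  [/\ \rank G = k,
      exists2 x, in_code G x & (x != 0) && (hwt x == d)
    & forall x, in_code G x -> x != 0 -> (d <= hwt x)%N].

Definition euclidean_LCD (k n : nat) (G : 'M[F3]_(k, n)) : Prop :=
  forall x : 'rV[F3]_n, in_code G x ->
    (forall c, in_code G c -> eip c x = 0) -> x = 0.
Arguments ternary_code_params n k d G : clear implicits.

(* Main.v *)
Require Import Defs.
From HB Require Import structures.
From mathcomp Require Import all_boot all_order all_algebra.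
Set Implicit Arguments. Unset Strict Implicit. Unset Printing Implicit Defensive.
Import GRing.Theory.

Inductive t3 := A0 | A1 | A2.
Definition t3_eqb (a b : t3) : bool :=
  match a, b with A0, A0 | A1, A1 | A2, A2 => true | _, _ => false end.
Lemma t3_eqP : Equality.axiom t3_eqb.
Proof. by case; case; constructor. Qed.
HB.instance Definition _ := hasDecEq.Build t3 t3_eqP.

Definition add3 (a b : t3) : t3 :=
  match a, b with
  | A0, x => x | x, A0 => x
  | A1, A1 => A2 | A2, A2 => A1 | _, _ => A0 end.
Definition mul3 (a b : t3) : t3 :=
  match a, b with
  | A0, _ => A0 | _, A0 => A0
  | A1, x => x | x, A1 => x | A2, A2 => A1 end.

Definition to_F3 (a : t3) : 'F_3 := match a with A0 => 0%R | A1 => 1%R | A2 => 2%:R%R end.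
Definition of_F3 (a : 'F_3) : t3 := match nat_of_ord a with 0 => A0 | 1 => A1 | _ => A2 end.
Lemma of_toK a : of_F3 (to_F3 a) = a. Proof. by case: a. Qed.
Lemma to_ofK a : to_F3 (of_F3 a) = a.
Proof. by case: a => [[|[|[|m]]] Hm] //; apply: val_inj. Qed.
Lemma to_add a b : to_F3 (add3 a b) = (to_F3 a + to_F3 b)%R.
Proof. by case: a; case: b; apply: val_inj. Qed.
Lemma to_mul a b : to_F3 (mul3 a b) = (to_F3 a * to_F3 b)%R.
Proof. by case: a; case: b; apply: val_inj. Qed.
Lemma to_inj : injective to_F3.
Proof. by move=> a b /(congr1 of_F3); rewrite !of_toK. Qed.
Lemma of_F3_eq0 a : (of_F3 a == A0) = (a == 0%R).
Proof. by rewrite -(to_ofK a); case: (of_F3 a). Qed.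

Fixpoint dot (u v : seq t3) : t3 :=
  match u, v with x :: u', y :: v' => add3 (mul3 x y) (dot u' v') | _, _ => A0 end.

Definition lv n (a : 'I_n -> 'F_3) : seq t3 := [seq of_F3 (a j) | j <- enum 'I_n].

Lemma sum_dot_seq n (a : 'I_n -> 'F_3) (b : nat -> t3) (e : seq 'I_n) :
  (\sum_(j <- e) a j * to_F3 (b j))%R =
  to_F3 (dot [seq of_F3 (a j) | j <- e] [seq b (nat_of_ord j) | j <- e]).
Proof.
elim: e => [|j e IH]; first by rewrite big_nil.
by rewrite big_cons /= to_add to_mul to_ofK IH.
Qed.

Lemma map_nth_enum n (s : seq t3) : size s = n ->
  [seq nth A0 s (nat_of_ord j) | j <- enum 'I_n] = s.
Proof.
move=> Hs.
have -> : [seq nth A0 s (nat_of_ord j) | j <- enum 'I_n] =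
   map (nth A0 s) (map val (enum 'I_n)) by rewrite -map_comp.
by rewrite val_enum_ord -Hs -/(mkseq _ _) mkseq_nth.
Qed.

Lemma sum_enum n (F : 'I_n -> 'F_3) :
  (\sum_(j < n) F j)%R = (\sum_(j <- enum 'I_n) F j)%R.
Proof. by rewrite enumT. Qed.

Lemma sum_dot n (a : 'I_n -> 'F_3) (s : seq t3) : size s = n ->
  (\sum_(j < n) a j * to_F3 (nth A0 s j))%R = to_F3 (dot (lv a) s).
Proof.
move=> Hs; rewrite sum_enum.
by rewrite (sum_dot_seq a (nth A0 s)) map_nth_enum.
Qed.

Lemma lv_nth n (s : seq t3) : size s = n ->
  lv (fun j : 'I_n => to_F3 (nth A0 s j)) = s.
Proof.
by move=> Hs; rewrite /lv (eq_map (fun j => of_toK _)) map_nth_enum.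
Qed.


Fixpoint vadd (u v : seq t3) : seq t3 :=
  match u, v with x :: u', y :: v' => add3 x y :: vadd u' v' | _, _ => [::] end.
Definition vscale (c : t3) (u : seq t3) := map (mul3 c) u.
Fixpoint scol (r : nat) (cs : seq (seq t3)) (z : seq t3) : seq t3 :=
  match cs, z with
  | c :: cs', x :: z' => vadd (vscale x c) (scol r cs' z')
  | _, _ => nseq r A0 end.
Definition wt (z : seq t3) := count (fun x => x != A0) z.

Lemma size_vadd u v : size (vadd u v) = minn (size u) (size v).
Proof.
elim: u v => [|x u IH] [|y v] //=; rewrite ?min0n ?minn0 //.
by rewrite IH minnSS.
Qed.

Lemma nth_vadd u v k : size u = size v ->
  nth A0 (vadd u v) k = add3 (nth A0 u k) (nth A0 v k).
Proof.
elim: u v k => [|x u IH] [|y v] [|k] //= [] H; exact: IH.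
Qed.

Lemma nth_vscale c u k : nth A0 (vscale c u) k = mul3 c (nth A0 u k).
Proof.
case: (ltnP k (size u)) => Hk; first by rewrite (nth_map A0).
by rewrite !nth_default ?size_map //; case: c.
Qed.

Lemma size_vscale c u : size (vscale c u) = size u.
Proof. exact: size_map. Qed.

Lemma size_scol r cs z : all (fun c => size c == r) cs -> size (scol r cs z) = r.
Proof.
elim: cs z => [|c cs IH] [|x z] /=; rewrite ?size_nseq //.
case/andP => /eqP Hc Hcs; by rewrite size_vadd size_vscale Hc IH // minnn.
Qed.

Lemma nth_scol r cs z k : all (fun c => size c == r) cs -> size z = size cs ->
  nth A0 (scol r cs z) k = dot z [seq nth A0 c k | c <- cs].
Proof.
elim: cs z => [|c cs IH] [|x z] //=.
- by move=> _ _; rewrite nth_nseq; case: ifP.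
- case/andP => /eqP Hc Hcs [] Hz.
  by rewrite nth_vadd ?size_vscale ?size_scol ?Hc // nth_vscale IH.
Qed.

Lemma dot_vadd a b w : size a = size b ->
  dot (vadd a b) w = add3 (dot a w) (dot b w).
Proof.
elim: a b w => [|x a IH] [|y b] [|c w] //= [] H.
rewrite IH //; move: (dot a w) (dot b w) => p q.
by case: x; case: y; case: c; case: p; case: q.
Qed.

Lemma dot_vscale k a w : dot (vscale k a) w = mul3 k (dot a w).
Proof.
have m0 : mul3 k A0 = A0 by case: k.
elim: a w => [|x a IH] [|c w] /=; rewrite ?m0 //.
rewrite IH; move: (dot a w) => p; clear IH m0.
by case: k; case: x; case: c; case: p.
Qed.

Lemma vscale0_add c s : size c = size s -> vadd (vscale A0 c) s = s.
Proof. elim: c s => [|x c IH] [|y s] //= [] H; by rewrite IH. Qed.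

Lemma vscale1 c : vscale A1 c = c.
Proof. by elim: c => //= x c ->; case: x. Qed.

Lemma wt_vscale x a : x != A0 -> wt (vscale x a) = wt a.
Proof.
move=> Hx; rewrite /wt /vscale count_map; apply: eq_count => y /=.
by case: x Hx; case: y.
Qed.

Inductive trie := TE | TN of bool & trie & trie & trie.
Definition sel (d : t3) (t0 t1 t2 : trie) :=
  match d with A0 => t0 | A1 => t1 | A2 => t2 end.
Fixpoint tmem (t : trie) (k : seq t3) : bool :=
  match t with
  | TE => false
  | TN b t0 t1 t2 => match k with [::] => b | d :: k' => tmem (sel d t0 t1 t2) k' end
  end.
Fixpoint tins (t : trie) (k : seq t3) : trie :=
  match k with
  | [::] => match t with TE => TN true TE TE TE | TN _ t0 t1 t2 => TN true t0 t1 t2 end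
  | d :: k' =>
    match t with
    | TE => match d with
            | A0 => TN false (tins TE k') TE TE
            | A1 => TN false TE (tins TE k') TE
            | A2 => TN false TE TE (tins TE k') end
    | TN b t0 t1 t2 => match d with
            | A0 => TN b (tins t0 k') t1 t2
            | A1 => TN b t0 (tins t1 k') t2
            | A2 => TN b t0 t1 (tins t2 k') end
    end
  end.

Lemma tmemE k : tmem TE k = false. Proof. by []. Qed.

Lemma tmem_ins t k k' : tmem (tins t k) k' = (k' == k) || tmem t k'.
Proof.
elim: k t k' => [|d k IH] t [|d' k'].
- by case: t.
- by case: t => [|b t0 t1 t2] /=; case: d'.
- by case: t => [|b t0 t1 t2] /=; case: d.
- case: t => [|b t0 t1 t2] /=; rewrite eqseq_cons;
  by case: d; case: d'; rewrite /= ?IH ?orbF.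
Qed.

Fixpoint tall (f : seq t3 -> bool) (t : trie) (pre : seq t3 -> seq t3) : bool :=
  match t with
  | TE => true
  | TN b t0 t1 t2 =>
    [&& (b ==> f (pre [::])), tall f t0 (fun k => pre (A0 :: k)),
        tall f t1 (fun k => pre (A1 :: k)) & tall f t2 (fun k => pre (A2 :: k))]
  end.

Lemma tallP f t pre k : tall f t pre -> tmem t k -> f (pre k).
Proof.
elim: t pre k => [|b t0 IH0 t1 IH1 t2 IH2] pre [|d k] //=;
  case/and4P => Hb H0 H1 H2.
- by move=> hb; rewrite hb in Hb.
- by case: d => /=; [apply: (IH0 _ _ H0) | apply: (IH1 _ _ H1) | apply: (IH2 _ _ H2)].
Qed.

Fixpoint tfold (g : seq t3 -> trie -> trie) (t : trie) (pre : seq t3 -> seq t3)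
  (acc : trie) : trie :=
  match t with
  | TE => acc
  | TN b t0 t1 t2 =>
    let acc1 := if b then g (pre [::]) acc else acc in
    let acc2 := tfold g t0 (fun k => pre (A0 :: k)) acc1 in
    let acc3 := tfold g t1 (fun k => pre (A1 :: k)) acc2 in
    tfold g t2 (fun k => pre (A2 :: k)) acc3
  end.

Section Fold.
Variable g : seq t3 -> trie -> trie.
Hypothesis gmono : forall s T k, tmem T k -> tmem (g s T) k.

Lemma tfold_mono t pre acc k : tmem acc k -> tmem (tfold g t pre acc) k.
Proof.
elim: t pre acc => [|b t0 IH0 t1 IH1 t2 IH2] pre acc //= H.
apply: IH2; apply: IH1; apply: IH0; case: b => //; exact: gmono.
Qed.

Variable F : seq t3 -> seq t3.
Hypothesis gcov : forall s T, tmem (g s T) (F s).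

Lemma tfold_cover t pre acc k : tmem t k -> tmem (tfold g t pre acc) (F (pre k)).
Proof.
elim: t pre acc k => [|b t0 IH0 t1 IH1 t2 IH2] pre acc [|d k] //=.
- move=> hb; rewrite hb; apply: tfold_mono; apply: tfold_mono; apply: tfold_mono.
  exact: gcov.
- case: d => /= H.
  + by apply: tfold_mono; apply: tfold_mono; apply: (IH0 (fun k => pre (A0 :: k))).
  + by apply: tfold_mono; apply: (IH1 (fun k => pre (A1 :: k))).
  + by apply: (IH2 (fun k => pre (A2 :: k))).
Qed.
End Fold.

Definition extg (c : seq t3) (s : seq t3) (T : trie) :=
  tins (tins T (vadd c s)) (vadd (vscale A2 c) s).
Definition ext (c : seq t3) (St T : trie) := tfold (extg c) St id T.

Lemma extg_mono c s T k : tmem T k -> tmem (extg c s T) k.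
Proof. by move=> H; rewrite /extg !tmem_ins H !orbT. Qed.

Lemma ext_mono c St T k : tmem T k -> tmem (ext c St T) k.
Proof. apply: tfold_mono; exact: extg_mono. Qed.

Lemma ext_cov1 c St T s : tmem St s -> tmem (ext c St T) (vadd c s).
Proof.
move=> H; apply: (@tfold_cover _ (@extg_mono c) (vadd c) _ _ id T s H).
by move=> s' T'; rewrite /extg !tmem_ins eqxx orbT.
Qed.

Lemma ext_cov2 c St T s : tmem St s -> tmem (ext c St T) (vadd (vscale A2 c) s).
Proof.
move=> H; apply: (@tfold_cover _ (@extg_mono c) (vadd (vscale A2 c)) _ _ id T s H).
by move=> s' T'; rewrite /extg !tmem_ins eqxx.
Qed.

Fixpoint stepa (c : seq t3) (prev : trie) (Ss : seq trie) : seq trie :=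
  match Ss with [::] => [::] | St :: Ss' => ext c prev St :: stepa c St Ss' end.
Definition step c Ss := match Ss with [::] => [::] | S0 :: Ss' => S0 :: stepa c S0 Ss' end.

Lemma nth_stepa c prev Ss w : w < size Ss ->
  nth TE (stepa c prev Ss) w = ext c (nth TE (prev :: Ss) w) (nth TE Ss w).
Proof.
elim: Ss prev w => [|St Ss IH] prev [|w] //= Hw; exact: IH.
Qed.

Lemma size_stepa c prev Ss : size (stepa c prev Ss) = size Ss.
Proof. by elim: Ss prev => //= St Ss IH prev; rewrite IH. Qed.

Lemma size_step c Ss : size (step c Ss) = size Ss.
Proof. by case: Ss => //= St Ss; rewrite size_stepa. Qed.

Definition init r := nseq 4 (tins TE (nseq r A0)).
Fixpoint build r cs := match cs with [::] => init r | c :: cs' => step c (build r cs') end.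

Fixpoint go t r cs : bool * seq trie :=
  match cs with
  | [::] => (true, init r)
  | c :: cs' =>
    let p := go t r cs' in
    let St := nth TE p.2 t in
    (p.1 && tall (fun s => ~~ tmem St (vadd c s)) St id, step c p.2)
  end.

Lemma go2 t r cs : (go t r cs).2 = build r cs.
Proof. by elim: cs => //= c cs ->. Qed.

Lemma size_build r cs : size (build r cs) = 4.
Proof. by elim: cs => //= c cs IH; rewrite size_step. Qed.

Lemma build_complete r cs z w : w < 4 -> all (fun c => size c == r) cs ->
  size z = size cs -> wt z <= w -> tmem (nth TE (build r cs) w) (scol r cs z).
Proof.
elim: cs z w => [|c cs IH] [|x z] w //=.
- by move=> Hw _ _ _; rewrite nth_nseq Hw tmem_ins eqxx.
- move=> Hw /andP[/eqP Hc Hcs] [] Hz Hwt.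
  have Hs : size (scol r cs z) = r by rewrite size_scol.
  have Hb : w < size (build r cs) by rewrite size_build.
  rewrite /step; case E: (build r cs) Hb => [|S0 Ss] //= Hb.
  case: x Hwt => /= Hwt.
  + rewrite vscale0_add ?Hs //.
    case: w Hw Hwt Hb => [|w] Hw Hwt Hb /=.
    * by have := IH z 0 Hw Hcs Hz Hwt; rewrite E.
    * rewrite nth_stepa //; apply: ext_mono.
      by have := IH z w.+1 Hw Hcs Hz Hwt; rewrite E.
  + case: w Hw Hwt Hb => [|w] // Hw Hwt Hb /=.
    rewrite nth_stepa // vscale1; apply: ext_cov1.
    have := IH z w (ltnW Hw) Hcs Hz Hwt; rewrite E.
    by case: w {Hw Hwt Hb}.
  + case: w Hw Hwt Hb => [|w] // Hw Hwt Hb /=.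
    rewrite nth_stepa //; apply: ext_cov2.
    have := IH z w (ltnW Hw) Hcs Hz Hwt; rewrite E.
    by case: w {Hw Hwt Hb}.
Qed.

Lemma split_wt z m1 m2 : wt z <= m1 + m2 -> exists a b,
  [/\ size a = size z, size b = size z, vadd a b = z, wt a <= m1 & wt b <= m2].
Proof.
elim: z m1 m2 => [|x z IH] m1 m2 /=.
  by move=> _; exists [::], [::].
case: (eqVneq x A0) => [->|Hx] /= H.
  have [a [b [Ha Hb Hab Hwa Hwb]]] := IH m1 m2 H.
  by exists (A0 :: a), (A0 :: b); rewrite /= Ha Hb Hab.
case: m1 H => [|m1] H.
  case: m2 H => [|m2] // H.
  have [a [b [Ha Hb Hab Hwa Hwb]]] := IH 0 m2 H.
  exists (A0 :: a), (x :: b); rewrite /= Ha Hb Hab Hx; split => //.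
have [a [b [Ha Hb Hab Hwa Hwb]]] := IH m1 m2 H.
exists (x :: a), (A0 :: b); rewrite /= Ha Hb Hab Hx; split => //.
by case: x Hx.
Qed.

Lemma scalar_key x c p q : x != A0 -> add3 (mul3 x c) (add3 p q) = A0 ->
  add3 c (mul3 x p) = mul3 (mul3 A2 x) q.
Proof. by case: x; case: c; case: p; case: q. Qed.

Lemma mul3_neq0 x : x != A0 -> mul3 A2 x != A0.
Proof. by case: x. Qed.

Lemma go_dist t r cs z : t < 4 -> (go t r cs).1 -> all (fun c => size c == r) cs ->
  size z = size cs -> scol r cs z = nseq r A0 -> has (fun x => x != A0) z ->
  t.*2.+2 <= wt z.
Proof.
move=> Ht; elim: cs z => [|c cs IH] [|x z] //=.
case/andP => Hok; rewrite go2 => Hall /andP[/eqP Hc Hcs] [] Hz Hsyn.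
have Hs : size (scol r cs z) = r by rewrite size_scol.
case: (eqVneq x A0) => [Ex|Hx] /=.
  subst x; rewrite vscale0_add ?Hs // in Hsyn.
  by move=> Hh; apply: IH.
move=> _; rewrite leqNgt; apply/negP => Hlt.
have Hwz : wt z <= t + t.
  by move: Hlt; rewrite /wt /= addnn add1n !ltnS.
have [a [b [Ha Hb Hab Hwa Hwb]]] := split_wt Hwz.
set St := nth TE (build r cs) t in Hall.
have Sa : tmem St (scol r cs (vscale x a)).
  apply: build_complete => //; first by rewrite size_vscale Ha.
  by rewrite wt_vscale.
have Sb : tmem St (scol r cs (vscale (mul3 A2 x) b)).
  apply: build_complete => //; first by rewrite size_vscale Hb.
  by rewrite wt_vscale // mul3_neq0.
have Heq : vadd c (scol r cs (vscale x a)) = scol r cs (vscale (mul3 A2 x) b).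
  apply: (@eq_from_nth _ A0).
    by rewrite size_vadd !size_scol // Hc minnn.
  rewrite size_vadd size_scol // Hc minnn => i Hi.
  rewrite nth_vadd ?size_scol // ?Hc // !nth_scol ?size_vscale ?Ha ?Hb //.
  rewrite !dot_vscale; apply: scalar_key => //.
  have := congr1 (fun s => nth A0 s i) Hsyn => /=.
  rewrite nth_vadd ?size_vscale ?size_scol ?Hc // nth_vscale nth_nseq Hi.
  by rewrite nth_scol ?size_vadd ?Ha ?Hb ?minnn // -Hab dot_vadd ?Ha ?Hb.
have := tallP Hall Sa; rewrite /= Heq.
by rewrite Sb.
Qed.

Local Open Scope ring_scope.

Definition mk m n (R : seq (seq t3)) : 'M['F_3]_(m, n) :=
  \matrix_(i, j) to_F3 (nth A0 (nth [::] R i) j).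
Definition wf m n (R : seq (seq t3)) := (size R == m) && all (fun r => size r == n) R.

Lemma wf_row m n R (i : 'I_m) : wf m n R -> size (nth [::] R i) = n.
Proof. by case/andP => /eqP Hs /allP Ha; apply/eqP/Ha; rewrite mem_nth // Hs. Qed.

Lemma lv_row m n R (i : 'I_m) : wf m n R -> lv (fun j => mk m n R i j) = nth [::] R i.
Proof.
move=> W; rewrite -[RHS](lv_nth (wf_row i W)) /lv; apply: eq_map => j.
by rewrite mxE.
Qed.

Lemma card_count n (P : pred 'I_n) : #|[set i | P i]| = count P (enum 'I_n).
Proof.
rewrite cardsE cardE -size_filter /enum_mem; congr size.
by rewrite (@eq_filter _ (mem 'I_n) predT) ?filter_predT.
Qed.

Lemma hwt_lv n (x : 'rV['F_3]_n) : hwt x = wt (lv (fun j => x 0 j)).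
Proof.
rewrite /hwt card_count /wt /lv [RHS]count_map; apply: eq_count => j /=.
by rewrite of_F3_eq0.
Qed.

Lemma hwt0 n : hwt (0 : 'rV['F_3]_n) = 0%N.
Proof.
rewrite /hwt card_count -(count_pred0 (enum 'I_n)); apply: eq_count => j /=.
by rewrite mxE eqxx.
Qed.

Definition chkGH (Gr Hc : seq (seq t3)) r :=
  all (fun g => all (fun kk => dot g [seq nth A0 c kk | c <- Hc] == A0) (iota 0 r)) Gr.
Definition chkM (Gr Mr : seq (seq t3)) k :=
  all (fun i => all (fun l => dot (nth [::] Mr i) [seq dot (nth [::] Gr l) g | g <- Gr]
     == (if i == l then A1 else A0)) (iota 0 k)) (iota 0 k).

Definition checks n k r t d (Gr Hc Mr : seq (seq t3)) :=
  [&& wf k n Gr, wf n r Hc, wf k k Mr, chkGH Gr Hc r & chkM Gr Mr k] &&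
      [&& (go t r Hc).1, (t < 4)%N, (0 < k)%N, wt (nth [::] Gr 0) == d & d == t.*2.+2].

Lemma entry_col n r Hc (j : 'I_n) (kk : 'I_r) : wf n r Hc ->
  mk n r Hc j kk = to_F3 (nth A0 [seq nth A0 c kk | c <- Hc] j).
Proof.
case/andP => /eqP Hs _; rewrite mxE (nth_map [::]) //; by rewrite Hs.
Qed.

Lemma GHt0 n k r Gr Hc : wf k n Gr -> wf n r Hc -> chkGH Gr Hc r ->
  mk k n Gr *m mk n r Hc = 0.
Proof.
move=> WG WH C; apply/matrixP => i kk; rewrite !mxE.
have Hn : size [seq nth A0 c kk | c <- Hc] = n.
  by rewrite size_map; case/andP: WH => /eqP.
rewrite (eq_bigr (fun j => mk k n Gr i j * to_F3 (nth A0 [seq nth A0 c kk | c <- Hc] j))).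
  rewrite sum_dot // lv_row //.
  have: nth [::] Gr i \in Gr by rewrite mem_nth //; case/andP: WG => /eqP ->.
  move/(allP C)/allP/(_ kk); rewrite mem_iota /= ltn_ord => /(_ isT) /eqP ->.
  by [].
by move=> j _; rewrite (entry_col _ _ WH).
Qed.

Lemma MGGt k n Gr Mr : wf k n Gr -> wf k k Mr -> chkM Gr Mr k ->
  mk k k Mr *m (mk k n Gr *m (mk k n Gr)^T) = 1%:M.
Proof.
move=> WG WM C; apply/matrixP => i l; rewrite !mxE.
set P := [seq dot (nth [::] Gr l) g | g <- Gr].
have HP : size P = k by rewrite size_map; case/andP: WG => /eqP.
have HGs : size Gr = k by case/andP: WG => /eqP.
rewrite (eq_bigr (fun p => mk k k Mr i p * to_F3 (nth A0 P p))).
  rewrite sum_dot // lv_row //.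
  move/allP: C => /(_ i); rewrite mem_iota ltn_ord => /(_ isT) /allP /(_ l).
  rewrite mem_iota ltn_ord => /(_ isT) /eqP ->.
  case: (eqVneq i l) => [->|Hne]; first by rewrite !eqxx mulr1n.
  have Hn : (nat_of_ord i == nat_of_ord l) = false by apply/negbTE.
  by rewrite Hn mulr0n.
move=> p _; congr (_ * _); rewrite !mxE.
rewrite (eq_bigr (fun j => mk k n Gr l j * to_F3 (nth A0 (nth [::] Gr p) j))).
  by rewrite sum_dot ?(wf_row p WG) // lv_row // /P (nth_map [::]) ?HGs.
by move=> j _; rewrite !mxE mulrC.
Qed.

Lemma code_ok n k r t d Gr Hc Mr : checks n k r t d Gr Hc Mr ->
  ternary_code_params n k d (mk k n Gr) /\ euclidean_LCD (mk k n Gr).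
Proof.
case/andP => /and5P[WG WH WM CGH CM] /and5P[Cgo Ht Hk Hw /eqP Hd].
set G := mk k n Gr.
have HM := MGGt WG WM CM.
have HM' : (G *m G^T) *m mk k k Mr = 1%:M by apply: mulmx1C.
have HGH := GHt0 WG WH CGH.
split; last first.
  move=> x /submxP [u ->] Horth.
  have Hx : u *m G *m G^T = 0.
    apply/matrixP => i0 l; rewrite (ord1 i0) [RHS]mxE [LHS]mxE.
    transitivity (eip (row l G) (u *m G)); last by apply: Horth; exact: row_sub.
    by rewrite /eip; apply: eq_bigr => j _; rewrite !mxE mulrC.
  have -> : u = 0.
    by rewrite -[u]mulmx1 -HM' !mulmxA Hx mul0mx.
  by rewrite mul0mx.
have Hhwt : forall x : 'rV_n, in_code G x -> x != 0 -> (d <= hwt x)%N.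
  move=> x /submxP [u Hu] Hx0.
  have HxH : x *m mk n r Hc = 0 by rewrite Hu -mulmxA HGH mulmx0.
  set z := lv (fun j => x 0 j).
  have Hz : size z = size Hc by rewrite size_map size_enum_ord; case/andP: WH => /eqP.
  have Hall : all (fun c => size c == r) Hc by case/andP: WH.
  rewrite hwt_lv Hd; apply: (go_dist Ht Cgo Hall Hz).
    apply: (@eq_from_nth _ A0); first by rewrite size_scol // size_nseq.
    rewrite size_scol // => kk Hkk.
    rewrite nth_scol // nth_nseq Hkk.
    apply: to_inj; rewrite -(sum_dot (fun j => x 0 j)); last first.
      by rewrite size_map -Hz size_map size_enum_ord.
    have H1 := congr1 (fun A : 'M['F_3]_(1, r) => A 0 (Ordinal Hkk)) HxH.
    rewrite /= !mxE in H1.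
    apply: etrans H1; apply: eq_bigr => j _; by rewrite (entry_col _ _ WH).
  apply/negP => /negP /hasPn Hn; move/negP: Hx0; apply; apply/eqP/matrixP => i j.
  rewrite (ord1 i) mxE; apply/eqP; rewrite -of_F3_eq0.
  have := Hn (of_F3 (x 0 j)); rewrite negbK; apply.
  by apply: map_f; rewrite mem_enum.
split.
- apply/eqP; rewrite eqn_leq rank_leq_row /=.
  have := mxrankM_maxr (mk k k Mr) (G *m G^T); rewrite HM mxrank1 => h.
  exact: leq_trans h (mxrankM_maxl _ _).
- exists (row (Ordinal Hk) G); first exact: row_sub.
  have Hw' : hwt (row (Ordinal Hk) G) = d.
    rewrite hwt_lv -(eqP Hw).
    transitivity (wt (lv (fun j => mk k n Gr (Ordinal Hk) j))); last by rewrite lv_row.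
    by congr wt; apply: eq_map => j; rewrite mxE.
  rewrite Hw' eqxx andbT; apply/eqP => H0.
  by move: Hw'; rewrite H0 hwt0 Hd.
- exact: Hhwt.
Qed.

Definition G1 : seq (seq t3) := [::
  [:: A0; A0; A0; A0; A0; A0; A0; A0; A0; A0; A0; A0; A0; A0; A0; A0; A0; A1; A2; A1; A0; A0; A0; A0; A2; A0; A0; A0; A0; A1; A0; A0; A0; A0; A2; A1; A2];
  [:: A2; A2; A2; A0; A0; A1; A2; A0; A1; A2; A0; A0; A0; A1; A1; A1; A0; A0; A0; A0; A0; A0; A0; A0; A0; A0; A0; A0; A0; A0; A0; A0; A0; A0; A0; A0; A0];
  [:: A1; A0; A0; A2; A0; A2; A2; A2; A2; A2; A2; A0; A0; A2; A0; A0; A1; A0; A0; A0; A0; A0; A0; A0; A0; A0; A0; A0; A0; A0; A0; A0; A0; A0; A0; A0; A0];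
  [:: A1; A2; A2; A1; A2; A1; A1; A0; A0; A0; A0; A1; A0; A1; A2; A0; A0; A0; A1; A0; A0; A0; A0; A0; A0; A0; A0; A0; A0; A0; A0; A0; A0; A0; A0; A0; A0];
  [:: A1; A0; A0; A0; A0; A1; A2; A2; A1; A1; A1; A2; A2; A1; A0; A0; A0; A0; A0; A1; A0; A0; A0; A0; A0; A0; A0; A0; A0; A0; A0; A0; A0; A0; A0; A0; A0];
  [:: A0; A1; A0; A0; A0; A0; A1; A2; A2; A1; A1; A1; A2; A2; A1; A0; A0; A0; A0; A0; A1; A0; A0; A0; A0; A0; A0; A0; A0; A0; A0; A0; A0; A0; A0; A0; A0];
  [:: A1; A1; A2; A0; A0; A2; A1; A1; A1; A0; A1; A1; A1; A1; A1; A0; A0; A0; A0; A0; A0; A1; A0; A0; A0; A0; A0; A0; A0; A0; A0; A0; A0; A0; A0; A0; A0];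
  [:: A1; A2; A2; A2; A0; A2; A0; A1; A0; A2; A0; A1; A1; A0; A0; A0; A0; A0; A0; A0; A0; A0; A1; A0; A0; A0; A0; A0; A0; A0; A0; A0; A0; A0; A0; A0; A0];
  [:: A0; A1; A2; A2; A2; A0; A2; A0; A1; A0; A2; A0; A1; A1; A0; A0; A0; A0; A0; A0; A0; A0; A0; A1; A0; A0; A0; A0; A0; A0; A0; A0; A0; A0; A0; A0; A0];
  [:: A2; A0; A0; A0; A1; A0; A2; A0; A0; A0; A1; A1; A1; A1; A2; A0; A0; A0; A0; A0; A0; A0; A0; A0; A1; A0; A0; A0; A0; A0; A0; A0; A0; A0; A0; A0; A0];
  [:: A0; A1; A0; A2; A1; A1; A0; A1; A1; A0; A2; A2; A0; A2; A1; A0; A0; A0; A0; A0; A0; A0; A0; A0; A0; A1; A0; A0; A0; A0; A0; A0; A0; A0; A0; A0; A0];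
  [:: A2; A1; A0; A2; A0; A2; A0; A2; A0; A0; A2; A0; A1; A2; A0; A0; A0; A0; A0; A0; A0; A0; A0; A0; A0; A0; A1; A0; A0; A0; A0; A0; A0; A0; A0; A0; A0];
  [:: A0; A2; A1; A0; A2; A0; A2; A0; A2; A0; A0; A2; A0; A1; A2; A0; A0; A0; A0; A0; A0; A0; A0; A0; A0; A0; A0; A1; A0; A0; A0; A0; A0; A0; A0; A0; A0];
  [:: A1; A2; A0; A2; A2; A1; A1; A0; A1; A0; A1; A2; A0; A1; A0; A0; A0; A0; A0; A0; A0; A0; A0; A0; A0; A0; A0; A0; A1; A0; A0; A0; A0; A0; A0; A0; A0];
  [:: A2; A1; A1; A1; A1; A0; A0; A2; A0; A0; A1; A0; A0; A0; A2; A0; A0; A0; A0; A0; A0; A0; A0; A0; A0; A0; A0; A0; A0; A1; A0; A0; A0; A0; A0; A0; A0];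
  [:: A0; A1; A1; A0; A2; A1; A0; A2; A0; A0; A2; A2; A2; A1; A0; A0; A0; A0; A0; A0; A0; A0; A0; A0; A0; A0; A0; A0; A0; A0; A1; A0; A0; A0; A0; A0; A0];
  [:: A2; A0; A0; A2; A2; A0; A0; A1; A2; A2; A1; A1; A0; A2; A2; A0; A0; A0; A0; A0; A0; A0; A0; A0; A0; A0; A0; A0; A0; A0; A0; A1; A0; A0; A0; A0; A0];
  [:: A1; A1; A1; A1; A1; A1; A1; A1; A2; A0; A0; A0; A2; A1; A1; A0; A0; A0; A0; A0; A0; A0; A0; A0; A0; A0; A0; A0; A0; A0; A0; A0; A1; A0; A0; A0; A0];
  [:: A2; A2; A0; A0; A2; A2; A0; A0; A0; A1; A2; A1; A2; A1; A2; A0; A0; A0; A0; A0; A0; A0; A0; A0; A0; A0; A0; A0; A0; A0; A0; A0; A0; A1; A0; A0; A0];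
  [:: A1; A1; A0; A1; A2; A1; A0; A1; A1; A1; A2; A1; A2; A0; A0; A0; A0; A0; A0; A0; A0; A0; A0; A0; A0; A0; A0; A0; A0; A0; A0; A0; A0; A0; A1; A0; A0];
  [:: A2; A1; A0; A1; A0; A0; A0; A1; A1; A0; A2; A1; A2; A2; A1; A0; A0; A0; A0; A0; A0; A0; A0; A0; A0; A0; A0; A0; A0; A0; A0; A0; A0; A0; A0; A1; A0];
  [:: A1; A0; A2; A0; A1; A2; A1; A0; A0; A2; A0; A2; A1; A1; A1; A0; A0; A0; A0; A0; A0; A0; A0; A0; A0; A0; A0; A0; A0; A0; A0; A0; A0; A0; A0; A0; A1]].
Definition H1 : seq (seq t3) := [::
  [:: A2; A0; A0; A1; A0; A0; A1; A1; A1; A1; A1; A1; A0; A0; A1];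
  [:: A1; A2; A1; A2; A2; A2; A0; A2; A0; A1; A2; A0; A2; A2; A0];
  [:: A0; A1; A2; A1; A2; A2; A2; A0; A2; A0; A1; A2; A0; A2; A2];
  [:: A2; A0; A0; A0; A0; A0; A2; A1; A1; A2; A2; A2; A1; A1; A2];
  [:: A2; A2; A2; A1; A2; A1; A0; A1; A2; A1; A1; A0; A1; A2; A1];
  [:: A2; A1; A1; A1; A0; A0; A1; A0; A2; A0; A1; A0; A2; A2; A0];
  [:: A0; A2; A1; A1; A1; A0; A0; A1; A0; A2; A0; A1; A0; A2; A2];
  [:: A2; A0; A1; A2; A0; A2; A0; A2; A2; A0; A1; A1; A0; A1; A2];
  [:: A2; A2; A2; A2; A1; A1; A2; A2; A0; A2; A2; A2; A0; A1; A1];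
  [:: A1; A2; A0; A1; A0; A0; A1; A0; A1; A0; A0; A1; A0; A2; A1];
  [:: A1; A1; A0; A2; A2; A2; A0; A2; A2; A1; A1; A2; A2; A2; A2];
  [:: A2; A1; A0; A1; A1; A0; A2; A2; A0; A2; A0; A2; A1; A0; A2];
  [:: A2; A2; A0; A1; A0; A2; A0; A1; A0; A0; A1; A1; A1; A2; A0];
  [:: A0; A2; A2; A0; A1; A0; A2; A0; A1; A0; A0; A1; A1; A1; A2];
  [:: A2; A0; A1; A0; A2; A2; A0; A1; A1; A1; A2; A1; A0; A2; A1];
  [:: A1; A2; A1; A0; A1; A1; A2; A1; A0; A1; A2; A1; A2; A2; A2];
  [:: A2; A1; A1; A2; A2; A2; A1; A1; A2; A0; A0; A0; A0; A0; A2];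
  [:: A2; A2; A0; A2; A1; A0; A2; A0; A2; A2; A2; A1; A2; A1; A0];
  [:: A0; A2; A2; A0; A2; A1; A0; A2; A0; A2; A2; A2; A1; A2; A1];
  [:: A1; A0; A0; A1; A1; A1; A1; A1; A1; A0; A0; A1; A0; A0; A2];
  [:: A2; A1; A2; A1; A0; A2; A1; A0; A2; A1; A2; A1; A0; A1; A0];
  [:: A0; A2; A1; A2; A1; A0; A2; A1; A0; A2; A1; A2; A1; A0; A1];
  [:: A1; A0; A0; A0; A0; A0; A0; A0; A0; A0; A0; A0; A0; A0; A0];
  [:: A0; A1; A0; A0; A0; A0; A0; A0; A0; A0; A0; A0; A0; A0; A0];
  [:: A0; A0; A1; A0; A0; A0; A0; A0; A0; A0; A0; A0; A0; A0; A0];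
  [:: A0; A0; A0; A1; A0; A0; A0; A0; A0; A0; A0; A0; A0; A0; A0];
  [:: A0; A0; A0; A0; A1; A0; A0; A0; A0; A0; A0; A0; A0; A0; A0];
  [:: A0; A0; A0; A0; A0; A1; A0; A0; A0; A0; A0; A0; A0; A0; A0];
  [:: A0; A0; A0; A0; A0; A0; A1; A0; A0; A0; A0; A0; A0; A0; A0];
  [:: A0; A0; A0; A0; A0; A0; A0; A1; A0; A0; A0; A0; A0; A0; A0];
  [:: A0; A0; A0; A0; A0; A0; A0; A0; A1; A0; A0; A0; A0; A0; A0];
  [:: A0; A0; A0; A0; A0; A0; A0; A0; A0; A1; A0; A0; A0; A0; A0];
  [:: A0; A0; A0; A0; A0; A0; A0; A0; A0; A0; A1; A0; A0; A0; A0];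
  [:: A0; A0; A0; A0; A0; A0; A0; A0; A0; A0; A0; A1; A0; A0; A0];
  [:: A0; A0; A0; A0; A0; A0; A0; A0; A0; A0; A0; A0; A1; A0; A0];
  [:: A0; A0; A0; A0; A0; A0; A0; A0; A0; A0; A0; A0; A0; A1; A0];
  [:: A0; A0; A0; A0; A0; A0; A0; A0; A0; A0; A0; A0; A0; A0; A1]].
Definition M1 : seq (seq t3) := [::
  [:: A2; A2; A0; A1; A0; A0; A1; A0; A0; A0; A1; A0; A2; A2; A0; A1; A2; A2; A1; A0; A1; A0];
  [:: A2; A2; A1; A2; A1; A1; A1; A2; A2; A1; A2; A0; A1; A0; A0; A2; A1; A1; A1; A0; A1; A0];
  [:: A0; A1; A2; A2; A1; A0; A2; A2; A1; A2; A2; A1; A1; A2; A0; A1; A1; A2; A1; A1; A1; A0];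
  [:: A1; A2; A2; A0; A0; A1; A1; A0; A1; A2; A1; A0; A2; A2; A0; A1; A1; A1; A2; A1; A1; A0];
  [:: A0; A1; A1; A0; A1; A2; A1; A2; A2; A1; A1; A0; A1; A1; A1; A1; A2; A1; A1; A0; A1; A2];
  [:: A0; A1; A0; A1; A2; A0; A0; A1; A0; A1; A0; A0; A2; A0; A0; A0; A1; A2; A0; A0; A1; A1];
  [:: A1; A1; A2; A1; A1; A0; A1; A2; A0; A0; A0; A2; A2; A2; A2; A1; A0; A2; A0; A2; A0; A2];
  [:: A0; A2; A2; A0; A2; A1; A2; A2; A2; A2; A2; A2; A2; A2; A2; A2; A2; A2; A1; A0; A1; A0];
  [:: A0; A2; A1; A1; A2; A0; A0; A2; A1; A0; A2; A2; A0; A0; A2; A2; A0; A1; A0; A1; A0; A2];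
  [:: A0; A1; A2; A2; A1; A1; A0; A2; A0; A1; A1; A1; A1; A1; A2; A0; A0; A1; A1; A0; A2; A2];
  [:: A1; A2; A2; A1; A1; A0; A0; A2; A2; A1; A1; A2; A0; A0; A1; A0; A2; A0; A0; A0; A0; A2];
  [:: A0; A0; A1; A0; A0; A0; A2; A2; A2; A1; A2; A2; A2; A2; A0; A1; A1; A1; A1; A2; A2; A2];
  [:: A2; A1; A1; A2; A1; A2; A2; A2; A0; A1; A0; A2; A1; A0; A0; A1; A2; A0; A0; A2; A0; A0];
  [:: A2; A0; A2; A2; A1; A0; A2; A2; A0; A1; A0; A2; A0; A1; A1; A2; A0; A2; A0; A1; A0; A2];
  [:: A0; A0; A0; A0; A1; A0; A2; A2; A2; A2; A1; A0; A0; A1; A2; A2; A0; A1; A1; A2; A2; A1];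
  [:: A1; A2; A1; A1; A1; A0; A1; A2; A2; A0; A0; A1; A1; A2; A2; A1; A0; A0; A0; A2; A0; A2];
  [:: A2; A1; A1; A1; A2; A1; A0; A2; A0; A0; A2; A1; A2; A0; A0; A0; A0; A0; A2; A0; A1; A0];
  [:: A2; A1; A2; A1; A1; A2; A2; A2; A1; A1; A0; A1; A0; A2; A1; A0; A0; A1; A1; A2; A0; A2];
  [:: A1; A1; A1; A2; A1; A0; A0; A1; A0; A1; A0; A1; A0; A0; A1; A0; A2; A1; A1; A0; A2; A0];
  [:: A0; A0; A1; A1; A0; A0; A2; A0; A1; A0; A0; A2; A2; A1; A2; A2; A0; A2; A0; A2; A1; A0];
  [:: A1; A1; A1; A1; A1; A1; A0; A1; A0; A2; A0; A2; A0; A0; A2; A0; A1; A0; A2; A1; A0; A1];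
  [:: A0; A0; A0; A0; A2; A1; A2; A0; A2; A2; A2; A2; A0; A2; A1; A2; A0; A2; A0; A0; A1; A2]].
Definition G2 : seq (seq t3) := [::
  [:: A0; A0; A0; A0; A0; A0; A0; A0; A0; A0; A0; A0; A0; A0; A0; A0; A0; A0; A0; A0; A0; A0; A0; A0; A0; A0; A0; A1; A0; A0; A1; A2; A0; A0; A0; A0; A0; A1; A2; A1];
  [:: A2; A1; A0; A2; A0; A0; A2; A1; A1; A2; A1; A1; A0; A0; A0; A0; A0; A0; A0; A0; A0; A0; A0; A0; A0; A0; A0; A0; A0; A0; A0; A0; A0; A0; A0; A0; A0; A0; A0; A0];
  [:: A0; A0; A1; A1; A0; A2; A0; A1; A2; A1; A2; A0; A1; A0; A0; A0; A0; A0; A0; A0; A0; A0; A0; A0; A0; A0; A0; A0; A0; A0; A0; A0; A0; A0; A0; A0; A0; A0; A0; A0];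
  [:: A0; A1; A1; A1; A1; A1; A2; A2; A1; A1; A2; A0; A0; A1; A0; A0; A0; A0; A0; A0; A0; A0; A0; A0; A0; A0; A0; A0; A0; A0; A0; A0; A0; A0; A0; A0; A0; A0; A0; A0];
  [:: A0; A1; A2; A1; A1; A2; A1; A1; A2; A0; A2; A0; A0; A0; A1; A0; A0; A0; A0; A0; A0; A0; A0; A0; A0; A0; A0; A0; A0; A0; A0; A0; A0; A0; A0; A0; A0; A0; A0; A0];
  [:: A0; A0; A0; A0; A2; A2; A2; A1; A2; A0; A2; A0; A0; A0; A0; A1; A0; A0; A0; A0; A0; A0; A0; A0; A0; A0; A0; A0; A0; A0; A0; A0; A0; A0; A0; A0; A0; A0; A0; A0];
  [:: A2; A1; A0; A2; A0; A2; A1; A0; A2; A1; A1; A0; A0; A0; A0; A0; A1; A0; A0; A0; A0; A0; A0; A0; A0; A0; A0; A0; A0; A0; A0; A0; A0; A0; A0; A0; A0; A0; A0; A0];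
  [:: A0; A0; A1; A1; A0; A2; A2; A0; A1; A2; A1; A0; A0; A0; A0; A0; A0; A1; A0; A0; A0; A0; A0; A0; A0; A0; A0; A0; A0; A0; A0; A0; A0; A0; A0; A0; A0; A0; A0; A0];
  [:: A2; A2; A1; A0; A1; A1; A1; A2; A1; A2; A1; A0; A0; A0; A0; A0; A0; A0; A1; A0; A0; A0; A0; A0; A0; A0; A0; A0; A0; A0; A0; A0; A0; A0; A0; A0; A0; A0; A0; A0];
  [:: A1; A0; A0; A0; A1; A1; A2; A1; A2; A1; A2; A0; A0; A0; A0; A0; A0; A0; A0; A1; A0; A0; A0; A0; A0; A0; A0; A0; A0; A0; A0; A0; A0; A0; A0; A0; A0; A0; A0; A0];
  [:: A2; A2; A0; A2; A0; A1; A0; A0; A2; A1; A2; A0; A0; A0; A0; A0; A0; A0; A0; A0; A1; A0; A0; A0; A0; A0; A0; A0; A0; A0; A0; A0; A0; A0; A0; A0; A0; A0; A0; A0];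
  [:: A1; A2; A2; A2; A0; A2; A2; A1; A0; A0; A0; A0; A0; A0; A0; A0; A0; A0; A0; A0; A0; A1; A0; A0; A0; A0; A0; A0; A0; A0; A0; A0; A0; A0; A0; A0; A0; A0; A0; A0];
  [:: A2; A1; A1; A1; A2; A2; A1; A1; A2; A0; A0; A0; A0; A0; A0; A0; A0; A0; A0; A0; A0; A0; A1; A0; A0; A0; A0; A0; A0; A0; A0; A0; A0; A0; A0; A0; A0; A0; A0; A0];
  [:: A1; A2; A2; A2; A1; A0; A0; A2; A0; A2; A0; A0; A0; A0; A0; A0; A0; A0; A0; A0; A0; A0; A0; A1; A0; A0; A0; A0; A0; A0; A0; A0; A0; A0; A0; A0; A0; A0; A0; A0];
  [:: A2; A1; A1; A1; A2; A0; A2; A2; A0; A0; A2; A0; A0; A0; A0; A0; A0; A0; A0; A0; A0; A0; A0; A0; A1; A0; A0; A0; A0; A0; A0; A0; A0; A0; A0; A0; A0; A0; A0; A0];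
  [:: A0; A0; A2; A1; A1; A0; A0; A1; A2; A2; A1; A0; A0; A0; A0; A0; A0; A0; A0; A0; A0; A0; A0; A0; A0; A1; A0; A0; A0; A0; A0; A0; A0; A0; A0; A0; A0; A0; A0; A0];
  [:: A2; A1; A2; A2; A2; A2; A2; A1; A0; A2; A2; A0; A0; A0; A0; A0; A0; A0; A0; A0; A0; A0; A0; A0; A0; A0; A1; A0; A0; A0; A0; A0; A0; A0; A0; A0; A0; A0; A0; A0];
  [:: A0; A1; A0; A0; A0; A2; A1; A0; A2; A0; A2; A0; A0; A0; A0; A0; A0; A0; A0; A0; A0; A0; A0; A0; A0; A0; A0; A0; A1; A0; A0; A0; A0; A0; A0; A0; A0; A0; A0; A0];
  [:: A2; A1; A1; A2; A0; A0; A1; A2; A1; A1; A1; A0; A0; A0; A0; A0; A0; A0; A0; A0; A0; A0; A0; A0; A0; A0; A0; A0; A0; A1; A0; A0; A0; A0; A0; A0; A0; A0; A0; A0];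
  [:: A2; A0; A2; A0; A2; A1; A1; A1; A2; A0; A2; A0; A0; A0; A0; A0; A0; A0; A0; A0; A0; A0; A0; A0; A0; A0; A0; A0; A0; A0; A1; A0; A0; A0; A0; A0; A0; A0; A0; A0];
  [:: A2; A2; A1; A0; A2; A1; A1; A0; A1; A1; A0; A0; A0; A0; A0; A0; A0; A0; A0; A0; A0; A0; A0; A0; A0; A0; A0; A0; A0; A0; A0; A1; A0; A0; A0; A0; A0; A0; A0; A0];
  [:: A0; A1; A0; A2; A1; A2; A1; A2; A1; A0; A2; A0; A0; A0; A0; A0; A0; A0; A0; A0; A0; A0; A0; A0; A0; A0; A0; A0; A0; A0; A0; A0; A1; A0; A0; A0; A0; A0; A0; A0];
  [:: A1; A0; A1; A2; A0; A0; A0; A2; A2; A2; A2; A0; A0; A0; A0; A0; A0; A0; A0; A0; A0; A0; A0; A0; A0; A0; A0; A0; A0; A0; A0; A0; A0; A1; A0; A0; A0; A0; A0; A0];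
  [:: A1; A0; A1; A1; A1; A2; A1; A2; A0; A2; A2; A0; A0; A0; A0; A0; A0; A0; A0; A0; A0; A0; A0; A0; A0; A0; A0; A0; A0; A0; A0; A0; A0; A0; A1; A0; A0; A0; A0; A0];
  [:: A0; A2; A1; A1; A1; A2; A2; A0; A2; A2; A0; A0; A0; A0; A0; A0; A0; A0; A0; A0; A0; A0; A0; A0; A0; A0; A0; A0; A0; A0; A0; A0; A0; A0; A0; A1; A0; A0; A0; A0];
  [:: A1; A0; A0; A2; A1; A2; A0; A0; A2; A2; A2; A0; A0; A0; A0; A0; A0; A0; A0; A0; A0; A0; A0; A0; A0; A0; A0; A0; A0; A0; A0; A0; A0; A0; A0; A0; A1; A0; A0; A0];
  [:: A1; A1; A0; A2; A0; A0; A0; A1; A0; A0; A1; A0; A0; A0; A0; A0; A0; A0; A0; A0; A0; A0; A0; A0; A0; A0; A0; A0; A0; A0; A0; A0; A0; A0; A0; A0; A0; A1; A0; A0];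
  [:: A0; A2; A1; A1; A0; A2; A0; A2; A2; A0; A0; A0; A0; A0; A0; A0; A0; A0; A0; A0; A0; A0; A0; A0; A0; A0; A0; A0; A0; A0; A0; A0; A0; A0; A0; A0; A0; A0; A1; A0];
  [:: A1; A0; A0; A2; A1; A1; A0; A1; A1; A2; A0; A0; A0; A0; A0; A0; A0; A0; A0; A0; A0; A0; A0; A0; A0; A0; A0; A0; A0; A0; A0; A0; A0; A0; A0; A0; A0; A0; A0; A1]].
Definition H2 : seq (seq t3) := [::
  [:: A1; A1; A1; A2; A1; A0; A1; A0; A0; A0; A0];
  [:: A0; A1; A1; A1; A2; A1; A0; A1; A0; A0; A0];
  [:: A0; A0; A1; A1; A1; A2; A1; A0; A1; A0; A0];
  [:: A1; A0; A0; A2; A0; A1; A1; A2; A1; A0; A0];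
  [:: A0; A0; A0; A0; A1; A1; A1; A2; A1; A0; A1];
  [:: A1; A1; A1; A2; A1; A1; A2; A1; A2; A1; A0];
  [:: A0; A1; A1; A1; A2; A1; A1; A2; A1; A2; A1];
  [:: A1; A1; A2; A0; A2; A2; A2; A1; A2; A1; A2];
  [:: A2; A0; A0; A0; A2; A2; A1; A2; A1; A2; A1];
  [:: A1; A0; A1; A2; A1; A2; A0; A1; A2; A1; A2];
  [:: A2; A0; A2; A2; A1; A1; A1; A0; A1; A2; A1];
  [:: A1; A0; A1; A1; A0; A1; A2; A1; A0; A1; A2];
  [:: A2; A0; A2; A2; A0; A0; A0; A2; A1; A0; A1];
  [:: A1; A0; A1; A1; A0; A0; A1; A0; A2; A1; A0];
  [:: A0; A1; A0; A1; A1; A0; A0; A1; A0; A2; A1];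
  [:: A1; A1; A2; A2; A2; A1; A1; A0; A1; A0; A2];
  [:: A2; A0; A0; A0; A1; A2; A0; A1; A0; A1; A0];
  [:: A0; A2; A0; A0; A0; A1; A2; A0; A1; A0; A1];
  [:: A1; A1; A0; A2; A1; A0; A2; A2; A0; A1; A0];
  [:: A0; A1; A1; A0; A2; A1; A0; A2; A2; A0; A1];
  [:: A1; A1; A2; A0; A1; A2; A2; A0; A2; A2; A0];
  [:: A0; A1; A1; A2; A0; A1; A2; A2; A0; A2; A2];
  [:: A2; A2; A0; A2; A1; A0; A0; A2; A2; A0; A2];
  [:: A2; A1; A1; A1; A1; A1; A2; A0; A2; A2; A0];
  [:: A0; A2; A1; A1; A1; A1; A1; A2; A0; A2; A2];
  [:: A2; A2; A1; A2; A0; A1; A0; A1; A2; A0; A2];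
  [:: A2; A1; A1; A2; A1; A0; A0; A0; A1; A2; A0];
  [:: A0; A2; A1; A1; A2; A1; A0; A0; A0; A1; A2];
  [:: A2; A2; A1; A2; A0; A2; A0; A0; A0; A0; A1];
  [:: A1; A0; A0; A0; A0; A0; A0; A0; A0; A0; A0];
  [:: A0; A1; A0; A2; A1; A2; A0; A0; A2; A0; A0];
  [:: A0; A0; A1; A0; A0; A0; A0; A0; A0; A0; A0];
  [:: A0; A0; A0; A1; A0; A0; A0; A0; A0; A0; A0];
  [:: A0; A0; A0; A0; A1; A0; A0; A0; A0; A0; A0];
  [:: A0; A0; A0; A0; A0; A1; A0; A0; A0; A0; A0];
  [:: A0; A0; A0; A0; A0; A0; A1; A0; A0; A0; A0];
  [:: A0; A0; A0; A0; A0; A0; A0; A1; A0; A0; A0];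
  [:: A0; A0; A0; A0; A0; A0; A0; A0; A1; A0; A0];
  [:: A0; A0; A0; A0; A0; A0; A0; A0; A0; A1; A0];
  [:: A0; A0; A0; A0; A0; A0; A0; A0; A0; A0; A1]].
Definition M2 : seq (seq t3) := [::
  [:: A1; A0; A0; A1; A0; A0; A2; A0; A1; A1; A0; A0; A1; A1; A0; A0; A2; A0; A0; A1; A0; A2; A1; A2; A0; A1; A1; A0; A2];
  [:: A0; A0; A1; A0; A2; A1; A1; A2; A2; A0; A0; A1; A1; A2; A1; A1; A0; A1; A0; A0; A1; A1; A1; A1; A0; A1; A2; A0; A2];
  [:: A0; A1; A1; A0; A0; A0; A0; A0; A2; A0; A0; A2; A1; A2; A0; A2; A0; A0; A1; A1; A1; A1; A1; A2; A1; A1; A2; A1; A2];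
  [:: A1; A0; A0; A1; A1; A1; A0; A2; A2; A2; A0; A1; A2; A2; A0; A2; A1; A0; A2; A1; A0; A2; A0; A0; A1; A2; A0; A1; A0];
  [:: A0; A2; A0; A1; A2; A2; A1; A2; A1; A0; A2; A1; A0; A2; A2; A2; A2; A1; A1; A1; A2; A0; A2; A2; A2; A0; A0; A2; A0];
  [:: A0; A1; A0; A1; A2; A1; A2; A1; A1; A1; A2; A0; A1; A0; A0; A0; A0; A1; A2; A2; A0; A1; A2; A2; A0; A1; A2; A0; A2];
  [:: A2; A1; A0; A0; A1; A2; A0; A0; A2; A1; A0; A2; A2; A0; A2; A1; A2; A2; A2; A1; A1; A2; A1; A2; A1; A1; A0; A0; A0];
  [:: A0; A2; A0; A2; A2; A1; A0; A1; A2; A2; A0; A1; A0; A2; A1; A2; A2; A1; A1; A2; A2; A1; A1; A1; A1; A0; A1; A1; A0];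
  [:: A1; A2; A2; A2; A1; A1; A2; A2; A1; A1; A2; A2; A2; A0; A2; A1; A2; A0; A2; A0; A2; A1; A2; A1; A2; A1; A2; A0; A0];
  [:: A1; A0; A0; A2; A0; A1; A1; A2; A1; A1; A1; A0; A2; A0; A1; A2; A0; A2; A2; A2; A2; A1; A0; A0; A2; A1; A2; A0; A1];
  [:: A0; A0; A0; A0; A2; A2; A0; A0; A2; A1; A0; A0; A0; A2; A2; A2; A1; A0; A1; A2; A0; A2; A0; A0; A0; A1; A0; A0; A1];
  [:: A0; A1; A2; A1; A1; A0; A2; A1; A2; A0; A0; A1; A1; A2; A1; A1; A1; A2; A1; A0; A1; A0; A0; A1; A1; A2; A1; A2; A2];
  [:: A1; A1; A1; A2; A0; A1; A2; A0; A2; A2; A0; A1; A0; A0; A0; A2; A1; A2; A2; A2; A2; A0; A0; A1; A1; A2; A1; A1; A0];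
  [:: A1; A2; A2; A2; A2; A0; A0; A2; A0; A0; A2; A2; A0; A1; A0; A2; A1; A2; A0; A2; A0; A2; A1; A2; A1; A1; A2; A1; A0];
  [:: A0; A1; A0; A0; A2; A0; A2; A1; A2; A1; A2; A1; A0; A0; A0; A1; A0; A0; A0; A1; A2; A0; A1; A0; A2; A0; A2; A1; A0];
  [:: A0; A1; A2; A2; A2; A0; A1; A2; A1; A2; A2; A1; A2; A2; A1; A2; A2; A0; A1; A1; A0; A2; A0; A0; A1; A1; A0; A1; A0];
  [:: A2; A0; A0; A1; A2; A0; A2; A2; A2; A0; A1; A1; A1; A1; A0; A2; A1; A2; A0; A1; A1; A1; A2; A2; A0; A1; A1; A0; A2];
  [:: A0; A1; A0; A0; A1; A1; A2; A1; A0; A2; A0; A2; A2; A2; A0; A0; A2; A2; A2; A1; A1; A0; A1; A2; A1; A1; A2; A1; A2];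
  [:: A0; A0; A1; A2; A1; A2; A2; A1; A2; A2; A1; A1; A2; A0; A0; A1; A0; A2; A1; A1; A1; A1; A0; A1; A0; A0; A0; A0; A0];
  [:: A1; A0; A1; A1; A1; A2; A1; A2; A0; A2; A2; A0; A2; A2; A1; A1; A1; A1; A1; A0; A2; A0; A0; A0; A1; A2; A1; A1; A2];
  [:: A0; A1; A1; A0; A2; A0; A1; A2; A2; A2; A0; A1; A2; A0; A2; A0; A1; A1; A1; A2; A1; A0; A0; A1; A0; A0; A1; A0; A1];
  [:: A2; A1; A1; A2; A0; A1; A2; A1; A1; A1; A2; A0; A0; A2; A0; A2; A1; A0; A1; A0; A0; A1; A1; A0; A2; A1; A1; A0; A2];
  [:: A1; A1; A1; A0; A2; A2; A1; A1; A2; A0; A0; A0; A0; A1; A1; A0; A2; A1; A0; A0; A0; A1; A0; A1; A1; A1; A2; A0; A1];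
  [:: A2; A1; A2; A0; A2; A2; A2; A1; A1; A0; A0; A1; A1; A2; A0; A0; A2; A2; A1; A0; A1; A0; A1; A1; A1; A2; A2; A2; A1];
  [:: A0; A0; A1; A1; A2; A0; A1; A1; A2; A2; A0; A1; A1; A1; A2; A1; A0; A1; A0; A1; A0; A2; A1; A1; A0; A0; A1; A1; A2];
  [:: A1; A1; A1; A2; A0; A1; A1; A0; A1; A1; A1; A2; A2; A1; A0; A1; A1; A1; A0; A2; A0; A1; A1; A2; A0; A2; A1; A2; A2];
  [:: A1; A2; A2; A0; A0; A2; A0; A1; A2; A2; A0; A1; A1; A2; A2; A0; A1; A2; A0; A1; A1; A1; A2; A2; A1; A1; A1; A0; A2];
  [:: A0; A0; A1; A1; A2; A0; A0; A1; A0; A0; A0; A2; A1; A1; A1; A1; A0; A1; A0; A1; A0; A0; A0; A2; A1; A2; A0; A1; A0];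
  [:: A2; A2; A2; A0; A0; A2; A0; A0; A0; A1; A1; A2; A0; A0; A0; A0; A2; A2; A0; A2; A1; A2; A1; A1; A2; A2; A2; A0; A0]].

Local Close Scope ring_scope.

Lemma chk1 : checks 37 22 15 3 8 G1 H1 M1. Proof. vm_compute. reflexivity. Qed.
Lemma chk2 : checks 40 29 11 2 6 G2 H2 M2. Proof. vm_compute. reflexivity. Qed.

Theorem proposition5p8 :
  (exists G : 'M['F_3]_(22, 37),
      ternary_code_params 37 22 8 G /\ euclidean_LCD G) /\
  (exists G : 'M['F_3]_(29, 40),
      ternary_code_params 40 29 6 G /\ euclidean_LCD G).
Proof.
split.
- exists (mk 22 37 G1); exact: code_ok chk1.
- exists (mk 29 40 G2); exact: code_ok chk2.
Qed.
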